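(* Let $Y=(Y_1,\dots,Y_m)$ be obtained by applying dependent rounding with a fixed tournament tree (as in the context) to $y^*$, and let $C=\{F_i: Y_i=1\}$ (a set of exactly $k$ facilities). Then for every client $D_j$, $j\in[n]$, $$\mathbb{E}\Big[\sum_{i=1}^k \tfrac{1}{i}\,c^{\rightarrow}_i(C,j)\Big]\;\le\;2.3589\cdot \mathrm{OPT}^{LP}_j,\qquad\text{where } \mathrm{OPT}^{LP}_j=\sum_{\ell=1}^k\sum_{i=1}^m \tfrac1\ell\, x^{*\ell}_{ij}c_{ij}.$$
   Context: Instance: clients $D_1,\dots,D_n$, facilities $F_1,\dots,F_m$, nonnegative costs $c_{i,j}$, integer $k\le m$. For a $k$-set $C$ of facilities, $c^{\rightarrow}_1(C,j)\le\dots\le c^{\rightarrow}_k(C,j)$ are the costs $\{c_{i,j}:F_i\in C\}$ sorted non-decreasingly. Linear program: minimize $\sum_{j=1}^n\sum_{\ell=1}^k\sum_{i=1}^m \frac1\ell x^\ell_{ij}c_{ij}$ subject to $\sum_{i=1}^m y_i=k$; $\sum_{\ell=1}^k x^\ell_{ij}\le y_i$ for all $i,j$; $\sum_{i=1}^m x^\ell_{ij}\ge 1$ for all $j\in[n],\ell\in[k]$; $y_i,x^\ell_{ij}\in[0,1]$. Let $(x^*,y^* )$ be an optimal solution. Dependent rounding with a fixed tournament tree: fix a rooted binary tree with $m$ leaves, leaf $i$ holding variable $y_i$ initialized to $y^*_i$; repeatedly take two nonempty sibling nodes whose parent is empty. If both hold fractional variables $y_a,y_b$ with $s=y_a+y_b$: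 if $s\le1$, with probability $y_a/s$ set $(y_a,y_b)\leftarrow(s,0)$, else $(0,s)$; if $s>1$, with probability $(1-y_b)/(2-s)$ set $(y_a,y_b)\leftarrow(1,s-1)$, else $(s-1,1)$. A still-fractional variable is promoted to the parent; if both became integral a dummy $\bot$ is promoted; if one node holds $\bot$ (or an integral variable) the other node's content is promoted unchanged. $Y_i$ is the final (0/1) value of $y_i$. *)

(* Defs.v *)
From HB Require Import structures.
From mathcomp Require Import all_boot all_order all_algebra.
From mathcomp Require Import reals.
Set Implicit Arguments. Unset Strict Implicit. Unset Printing Implicit Defensive.
Import Order.TTheory GRing.Theory Num.Theory.
Local Open Scope ring_scope.

Section Defs.
Variable R : realType.

(* x l i j stands for x^{l+1}_{ij}  (l : 'I_k is 0-based), y i for y_i. *)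
Definition lp_obj_j (n m k : nat) (c : 'I_m -> 'I_n -> R)
  (x : 'I_k -> 'I_m -> 'I_n -> R) (j : 'I_n) : R :=
  \sum_(l < k) \sum_(i < m) (l.+1%:R)^-1 * x l i j * c i j.

Definition lp_obj (n m k : nat) (c : 'I_m -> 'I_n -> R)
  (x : 'I_k -> 'I_m -> 'I_n -> R) : R :=
  \sum_(j < n) lp_obj_j c x j.

Definition lp_feasible (n m k : nat)
  (x : 'I_k -> 'I_m -> 'I_n -> R) (y : 'I_m -> R) : Prop :=
  [/\ \sum_(i < m) y i = k%:R,
      (forall i j, \sum_(l < k) x l i j <= y i),
      (forall j l, 1 <= \sum_(i < m) x l i j),
      (forall i, 0 <= y i <= 1) &
      (forall l i j, 0 <= x l i j <= 1)].

Definition lp_optimal (n m k : nat) (c : 'I_m -> 'I_n -> R)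
  (x : 'I_k -> 'I_m -> 'I_n -> R) (y : 'I_m -> R) : Prop :=
  lp_feasible x y /\
  forall (x' : 'I_k -> 'I_m -> 'I_n -> R) (y' : 'I_m -> R), lp_feasible x' y' -> lp_obj c x <= lp_obj c x'.

Inductive ttree (m : nat) : Type :=
| Leaf of 'I_m
| Node of ttree m & ttree m.

Fixpoint leaves (m : nat) (t : ttree m) : seq 'I_m :=
  match t with
  | Leaf i => [:: i]
  | Node l r => leaves l ++ leaves r
  end.

Definition tree_ok (m : nat) (t : ttree m) : Prop :=
  perm_eq (leaves t) (enum 'I_m).

Definition fracb (v : R) : bool := (0 < v) && (v < 1).

Definition upd (m : nat) (y : 'I_m -> R) (i : 'I_m) (v : R) : 'I_m -> R :=
  fun i' => if i' == i then v else y i'.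

(* An outcome: current values of all variables, and the content of the
   node (Some i = fractional variable y_i, None = dummy bot / integral). *)
Definition outcome (m : nat) := (('I_m -> R) * option 'I_m)%type.
(* A finitely supported distribution: list of (probability, outcome). *)
Definition dist (m : nat) := seq (R * outcome m).

Definition content (m : nat) (y : 'I_m -> R) (i : 'I_m) : option 'I_m :=
  if fracb (y i) then Some i else None.

(* one pairing step at a node whose two children hold a and b *)
Definition combine (m : nat) (y : 'I_m -> R) (a b : option 'I_m) : dist m :=
  match a, b with
  | Some ia, Some ib =>
      let ya := y ia in let yb := y ib in let s := ya + yb in
      if s <= 1 then
        let y1 := upd (upd y ia s) ib 0 in
        let y2 := upd (upd y ia 0) ib s in
        [:: (ya / s, (y1, if fracb s then Some ia else None));
            (1 - ya / s, (y2, if fracb s then Some ib else None))]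
      else
        let p := (1 - yb) / (2 - s) in
        let y1 := upd (upd y ia 1) ib (s - 1) in
        let y2 := upd (upd y ia (s - 1)) ib 1 in
        [:: (p, (y1, content y1 ib));
            (1 - p, (y2, content y2 ia))]
  | Some ia, None => [:: (1, (y, Some ia))]
  | None, ob => [:: (1, (y, ob))]
  end.

(* distribution of outcomes of processing a subtree (its variables are
   disjoint from the others, so subtrees are processed independently) *)
Fixpoint round (m : nat) (t : ttree m) (y : 'I_m -> R) : dist m :=
  match t with
  | Leaf i => [:: (1, (y, content y i))]
  | Node l r =>
      flatten [seq
        flatten [seq
          [seq (p * q * s, o) | '(s, o) <- combine y2 a b]
        | '(q, (y2, b)) <- round r y1]
      | '(p, (y1, a)) <- round l y]
  end.

Definition rounding_expect (m : nat) (t : ttree m) (ystar : 'I_m -> R)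
  (f : ('I_m -> R) -> R) : R :=
  \sum_(o <- round t ystar) o.1 * f o.2.1.

Definition chosen (m : nat) (Y : 'I_m -> R) : {set 'I_m} := [set i | Y i == 1].

Definition sorted_costs (n m : nat) (c : 'I_m -> 'I_n -> R) (C : {set 'I_m})
  (j : 'I_n) : seq R := sort <=%R [seq c i j | i <- enum C].

Definition ordered_cost (n m k : nat) (c : 'I_m -> 'I_n -> R)
  (C : {set 'I_m}) (j : 'I_n) : R :=
  \sum_(l < k) (l.+1%:R)^-1 * nth 0 (sorted_costs c C j) l.

End Defs.

(* Main.v *)
Require Import Defs.
From HB Require Import structures.
From mathcomp Require Import all_boot all_order all_algebra.
From mathcomp Require Import reals ring lra.
Set Implicit Arguments. Unset Strict Implicit. Unset Printing Implicit Defensive.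
Import Order.TTheory GRing.Theory Num.Theory.
Local Open Scope ring_scope.

Fixpoint AllP {T : Type} (P : T -> Prop) (s : seq T) : Prop :=
  match s with [::] => True | x :: s' => P x /\ AllP P s' end.

Lemma allP_cat {T} (P : T -> Prop) s1 s2 : AllP P s1 -> AllP P s2 -> AllP P (s1 ++ s2).
Proof. by elim: s1 => //= x s IH [H1 H2] H3; split => //; apply: IH. Qed.

Lemma allP_flat_map {T U} (P : T -> Prop) (Q : U -> Prop) (F : T -> seq U) s :
  AllP P s -> (forall x, P x -> AllP Q (F x)) -> AllP Q (flatten (map F s)).
Proof.
elim: s => //= x s IH [H1 H2] HF; apply: allP_cat; first exact: HF.
exact: IH.
Qed.

Lemma allP_map {T U} (P : T -> Prop) (Q : U -> Prop) (F : T -> U) s :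
  AllP P s -> (forall x, P x -> Q (F x)) -> AllP Q (map F s).
Proof. by elim: s => //= x s IH [H1 H2] HF; split; [apply: HF | apply: IH]. Qed.

Section Round.
Variable R : realType.
Variable m : nat.
Implicit Types y : 'I_m -> R.

Definition valid y := forall i, 0 <= y i <= 1.

Definition INV (S : seq 'I_m) y (o : R * outcome R m) : Prop :=
  0 <= o.1 /\ valid o.2.1 /\ (forall i, i \notin S -> o.2.1 i = y i) /\
      (forall i, i \in S -> o.2.2 <> Some i -> o.2.1 i = 0 \/ o.2.1 i = 1) /\
      (forall i, o.2.2 = Some i -> i \in S /\ 0 < o.2.1 i < 1) /\
      \sum_i o.2.1 i = \sum_i y i.

Definition okc (ia ib : 'I_m) (A B : R) (c : option 'I_m) : Prop :=
  (c = None /\ (A = 0 \/ A = 1) /\ (B = 0 \/ B = 1)) \/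
  (c = Some ia /\ (0 < A < 1) /\ (B = 0 \/ B = 1)) \/
  (c = Some ib /\ (0 < B < 1) /\ (A = 0 \/ A = 1)).

Lemma upd2E y ia ib A B i : ia != ib ->
  upd (upd y ia A) ib B i = if i == ib then B else if i == ia then A else y i.
Proof. by move=> _; rewrite /upd. Qed.

Lemma upd2_ia y ia ib A B : ia != ib -> upd (upd y ia A) ib B ia = A.
Proof. by move=> H; rewrite /upd (negbTE H) eqxx. Qed.
Lemma upd2_ib y ia ib A B : upd (upd y ia A) ib B ib = B.
Proof. by rewrite /upd eqxx. Qed.
Lemma upd2_o y ia ib A B i : i != ia -> i != ib -> upd (upd y ia A) ib B i = y i.
Proof. by move=> H1 H2; rewrite /upd (negbTE H1) (negbTE H2). Qed.

Lemma sum_upd y i0 v : \sum_i upd y i0 v i = \sum_i y i - y i0 + v.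
Proof.
rewrite (bigD1 i0) // [in RHS](bigD1 i0) //= /upd eqxx.
rewrite (eq_bigr (fun i => y i)); last by move=> i /negbTE ->.
by rewrite [y i0 + _]addrC addrK addrC.
Qed.

Lemma frac01 (v : R) : 0 <= v <= 1 -> ~~ fracb v -> v = 0 \/ v = 1.
Proof.
rewrite /fracb => /andP[h0 h1] /nandP[|]; rewrite -leNgt => h.
  by left; apply/eqP; rewrite eq_le h h0.
by right; apply/eqP; rewrite eq_le h h1.
Qed.

Lemma combine_spec y ia ib : valid y -> ia != ib -> 0 < y ia < 1 -> 0 < y ib < 1 ->
  exists p A B A' B' c1 c2,
  combine y (Some ia) (Some ib) =
     [:: (p, (upd (upd y ia A) ib B, c1)); (1 - p, (upd (upd y ia A') ib B', c2))]
  /\ [/\ 0 <= p <= 1, 0 <= A <= 1, 0 <= B <= 1, 0 <= A' <= 1 & 0 <= B' <= 1]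
  /\ [/\ A + B = y ia + y ib, A' + B' = y ia + y ib,
         p * A + (1 - p) * A' = y ia & p * B + (1 - p) * B' = y ib]
  /\ [/\ A * B <= y ia * y ib, A' * B' <= y ia * y ib,
         okc ia ib A B c1 & okc ia ib A' B' c2].
Proof.
move=> vy neq /andP[a0 a1] /andP[b0 b1].
rewrite /combine.
set ya := y ia; set yb := y ib.
have {a0 a1 b0 b1} [a0 a1 b0 b1] : [/\ 0 < ya, ya < 1, 0 < yb & yb < 1] by [].
have s0 : 0 < ya + yb by rewrite addr_gt0.
case: ifP => hs.
- exists (ya / (ya + yb)), (ya + yb), 0, 0, (ya + yb).
  exists (if fracb (ya + yb) then Some ia else None).
  exists (if fracb (ya + yb) then Some ib else None).
  split; first by [].
  have hp0 : 0 <= ya / (ya + yb) by rewrite divr_ge0 // ltW.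
  have hp1 : ya / (ya + yb) <= 1 by rewrite ler_pdivrMr // mul1r lerDl ltW.
  have s1 : ~~ fracb (ya + yb) -> ya + yb = 1.
    by rewrite /fracb s0 /= -leNgt => h; apply/eqP; rewrite eq_le hs h.
  split; first by rewrite hp0 hp1 (ltW s0) hs lexx ler01.
  split.
    split; [by rewrite addr0 | by rewrite add0r | | ].
    + by rewrite mulr0 addr0 mulfVK // gt_eqF.
    + by rewrite mulr0 add0r mulrBl mul1r mulfVK ?gt_eqF // addrC addKr.
  split.
  + by rewrite mulr0 mulr_ge0 // ltW.
  + by rewrite mul0r mulr_ge0 // ltW.
  + case hf: (fracb (ya + yb)).
      by right; left; split => //; split; [ | left].
    by left; split => //; split; [right; apply: s1; rewrite hf | left].
  + case hf: (fracb (ya + yb)).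
      by right; right; split => //; split; [ | left].
    by left; split => //; split; [left | right; apply: s1; rewrite hf].
- have hs' : 1 < ya + yb by rewrite ltNge hs.
  have d0 : 0 < 2 - (ya + yb) by lra.
  set p := (1 - yb) / (2 - (ya + yb)).
  exists p, 1, (ya + yb - 1), (ya + yb - 1), 1.
  exists (content (upd (upd y ia 1) ib (ya + yb - 1)) ib).
  exists (content (upd (upd y ia (ya + yb - 1)) ib 1) ia).
  split; first by [].
  have hp0 : 0 <= p by apply: divr_ge0; lra.
  have hp1 : p <= 1 by rewrite ler_pdivrMr // mul1r; lra.
  have hf : fracb (ya + yb - 1).
    by apply/andP; split; lra.
  have r0 : 0 <= ya + yb - 1 <= 1 by apply/andP; split; lra.
  split; first by rewrite hp0 hp1 r0 lexx ler01.
  have d0' : 2 - (ya + yb) != 0 by rewrite gt_eqF.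
  have hpA : p * 1 + (1 - p) * (ya + yb - 1) = ya.
    rewrite /p; field; exact: d0'.
  have hab : ya + yb - 1 <= ya * yb.
    rewrite -subr_ge0 (_ : _ - _ = (1 - ya) * (1 - yb)); last by ring.
    by rewrite mulr_ge0 // subr_ge0 ltW.
  split.
    split.
    + by rewrite addrC subrK.
    + by rewrite subrK.
    + exact: hpA.
    + rewrite /p; field; exact: d0'.
  split.
  + by rewrite mul1r.
  + by rewrite mulr1.
  + by right; right; rewrite /content upd2_ib hf; split => //; split=> //; right.
  + by right; left; rewrite /content upd2_ia // hf; split => //; split=> //; right.
Qed.


Lemma disj_of (l r : seq 'I_m) : uniq (l ++ r) -> forall i, i \in l -> i \notin r.
Proof.
rewrite cat_uniq => /and3P[_ H _] i il; apply/negP => ir.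
by move/hasPn: H => /(_ i ir); rewrite /= il.
Qed.

Lemma out_inv (l r : seq 'I_m) y y1 y2 ia ib p q P A B c :
  uniq (l ++ r) -> INV l y (p, (y1, Some ia)) -> INV r y1 (q, (y2, Some ib)) ->
  0 <= P -> 0 <= A <= 1 -> 0 <= B <= 1 -> A + B = y2 ia + y2 ib ->
  okc ia ib A B c ->
  INV (l ++ r) y (p * q * P, (upd (upd y2 ia A) ib B, c)).
Proof.
move=> U [p0 [v1 [o1 [z1 [f1 s1]]]]] [q0 [v2 [o2 [z2 [f2 s2]]]]] P0 hA hB hAB hc.
have dj := disj_of U.
have [ial _] := f1 ia erefl.
have [ibr _] := f2 ib erefl.
have iar : ia \notin r by apply: dj.
have neq : ia != ib by apply/eqP => E; move: iar; rewrite E ibr.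
rewrite /= in p0 v1 o1 z1 f1 s1 q0 v2 o2 z2 f2 s2.
rewrite /INV /=.
split; first by rewrite !mulr_ge0.
split.
  move=> i; rewrite upd2E //; case: ifP => _ //; case: ifP => _ //.
split.
  move=> i; rewrite mem_cat negb_or => /andP[il ir].
  have hia : i != ia by apply/eqP => E; move: il; rewrite E ial.
  have hib : i != ib by apply/eqP => E; move: ir; rewrite E ibr.
  by rewrite upd2_o // o2 // o1.
split.
  move=> i; rewrite mem_cat => ilr hci.
  case: (eqVneq i ia) => [Ei|hia].
    rewrite Ei upd2_ia //; rewrite Ei in hci.
    by case: hc => [[_ [h _]]|[[E _]|[_ [_ h]]]] //; case: hci.
  case: (eqVneq i ib) => [Ei|hib].
    rewrite Ei upd2_ib; rewrite Ei in hci.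
    by case: hc => [[_ [_ h]]|[[_ [_ h]]|[E _]]] //; case: hci.
  rewrite upd2_o //.
  case/orP: ilr => [il|ir].
    have ir : i \notin r by apply: dj.
    by rewrite o2 //; apply: z1 => // -[E]; move: hia; rewrite E eqxx.
  by apply: z2 => // -[E]; move: hib; rewrite E eqxx.
split.
  move=> i hci.
  case: hc => [[E _]|[[E [h _]]|[E [h _]]]]; rewrite hci in E => //; case: E => ->.
    by split; [rewrite mem_cat ial | rewrite upd2_ia].
  by split; [rewrite mem_cat ibr orbT | rewrite upd2_ib].
rewrite sum_upd sum_upd.
rewrite (_ : upd y2 ia A ib = y2 ib); last by rewrite /upd eq_sym (negbTE neq).
rewrite -s1 -s2; lra.
Qed.

Lemma round_inv t y : uniq (leaves t) -> valid y -> AllP (INV (leaves t) y) (round t y).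
Proof.
elim: t y => [i|l IHl r IHr] y /=.
  move=> _ vy; split => //.
  rewrite /INV /=; split; first exact: ler01.
  split => //; split => //.
  split.
    move=> i'; rewrite inE => /eqP -> hc; apply: frac01 => //.
    by apply/negP => hf; apply: hc; rewrite /content hf.
  split => //.
  by move=> i'; rewrite /content; case: ifP => // hf [<-]; rewrite mem_seq1 eqxx.
move=> U vy.
have Ul : uniq (leaves l) by move: U; rewrite cat_uniq => /andP[].
have Ur : uniq (leaves r) by move: U; rewrite cat_uniq => /and3P[].
apply: (allP_flat_map (IHl y Ul vy)) => -[p [y1 a]] /= Hx.
have v1 : valid y1 by case: Hx => _ [].
apply: (allP_flat_map (IHr y1 Ur v1)) => -[q [y2 b]] /= Hz.
case: a Hx => [ia|] Hx; [case: b Hz => [ib|] Hz|].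
- have [p0 [_ [_ [_ [f1 _]]]]] := Hx.
  have [q0 [v2 [o2 [_ [f2 _]]]]] := Hz.
  rewrite /= in p0 f1 q0 v2 o2 f2.
  have [ial fa] := f1 ia erefl.
  have [ibr fb] := f2 ib erefl.
  have dj := disj_of U.
  have iar : ia \notin leaves r by apply: dj.
  have neq : ia != ib by apply/eqP => E; move: iar; rewrite E ibr.
  have fa' : 0 < y2 ia < 1 by rewrite /= o2.
  have [P [A [B [A' [B' [c1 [c2 [-> [[hP hA hB hA' hB'] [[e1 e2 _ _] [_ _ k1 k2]]]]]]]]]]] :=
    combine_spec v2 neq fa' fb.
  rewrite /=; split; last split => //.
    apply: (out_inv U Hx Hz) => //; by case/andP: hP.
  apply: (out_inv U Hx Hz) => //; by case/andP: hP => _; rewrite subr_ge0.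
- rewrite /=; split => //.
  have [p0 [v1' [o1 [z1 [f1 s1]]]]] := Hx.
  have [q0 [v2 [o2 [z2 [f2 s2]]]]] := Hz.
  rewrite /= in p0 v1' o1 z1 f1 s1 q0 v2 o2 z2 f2 s2.
  have dj := disj_of U.
  split; first by rewrite mulr1 mulr_ge0.
  split => //=.
  split.
    by move=> i; rewrite mem_cat negb_or => /andP[il ir]; rewrite o2 // o1.
  split.
    move=> i; rewrite mem_cat => /orP[il|ir] hc.
      by rewrite o2; [apply: z1 | apply: dj].
    by apply: z2.
  split.
    move=> i [<-]; have [ial h] := f1 ia erefl.
    by rewrite o2 ?mem_cat ?ial //; apply: dj.
  by rewrite s2 s1.
- rewrite /=; split => //.
  have [p0 [v1' [o1 [z1 [f1 s1]]]]] := Hx.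
  have [q0 [v2 [o2 [z2 [f2 s2]]]]] := Hz.
  rewrite /= in p0 v1' o1 z1 f1 s1 q0 v2 o2 z2 f2 s2.
  have dj := disj_of U.
  split; first by rewrite mulr1 mulr_ge0.
  split => //=.
  split.
    by move=> i; rewrite mem_cat negb_or => /andP[il ir]; rewrite o2 // o1.
  split.
    move=> i; rewrite mem_cat => /orP[il|ir] hc.
      by rewrite o2; [apply: z1 | apply: dj].
    by apply: z2.
  split.
    by move=> i hb; have [ir h] := f2 i hb; rewrite mem_cat ir orbT.
  by rewrite s2 s1.
Qed.


Definition Ex (d : seq (R * outcome R m)) (F : ('I_m -> R) -> R) : R :=
  \sum_(o <- d) o.1 * F o.2.1.

Lemma ler_sum_allP {T} (P : T -> Prop) (d : seq T) (F G : T -> R) :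
  AllP P d -> (forall x, P x -> F x <= G x) -> \sum_(x <- d) F x <= \sum_(x <- d) G x.
Proof.
elim: d => [|x d IH] /=; first by rewrite !big_nil.
by move=> [Hx Hd] H; rewrite !big_cons lerD //; [apply: H | apply: IH].
Qed.

Lemma eq_sum_allP {T} (P : T -> Prop) (d : seq T) (F G : T -> R) :
  AllP P d -> (forall x, P x -> F x = G x) -> \sum_(x <- d) F x = \sum_(x <- d) G x.
Proof.
elim: d => [|x d IH] /=; first by rewrite !big_nil.
by move=> [Hx Hd] H; rewrite !big_cons H // (IH Hd H).
Qed.

Lemma Ex_flat_map {T} (d : seq T) (G : T -> seq (R * outcome R m)) F :
  Ex (flatten (map G d)) F = \sum_(x <- d) Ex (G x) F.
Proof. by rewrite /Ex big_flatten big_map. Qed.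

Lemma Ex_scale c (d : seq (R * outcome R m)) F :
  Ex [seq (c * s, o) | '(s, o) <- d] F = c * Ex d F.
Proof.
rewrite /Ex big_map mulr_sumr; apply: eq_bigr => -[s o] _ /=; by rewrite mulrA.
Qed.

Definition good (F : ('I_m -> R) -> R) := forall y ia ib, valid y -> ia != ib ->
  0 < y ia < 1 -> 0 < y ib < 1 -> Ex (combine y (Some ia) (Some ib)) F <= F y.

Lemma round_Ex F t y : good F -> uniq (leaves t) -> valid y -> Ex (round t y) F <= F y.
Proof.
move=> gF; elim: t y => [i|l IHl r IHr] y /=.
  by move=> _ _; rewrite /Ex big_seq1 /= mul1r.
move=> U vy.
have Ul : uniq (leaves l) by move: U; rewrite cat_uniq => /andP[].
have Ur : uniq (leaves r) by move: U; rewrite cat_uniq => /and3P[].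
rewrite Ex_flat_map; apply: le_trans (IHl y Ul vy).
apply: (ler_sum_allP (round_inv Ul vy)) => -[p [y1 a]] Hx /=.
have [p0 [v1 [o1 [z1 [f1 s1]]]]] := Hx.
rewrite /= in p0 v1 o1 z1 f1 s1.
rewrite Ex_flat_map; apply: le_trans (ler_wpM2l p0 (IHr y1 Ur v1)).
rewrite /Ex mulr_sumr.
apply: (ler_sum_allP (round_inv Ur v1)) => -[q [y2 b]] Hz /=.
have [q0 [v2 [o2 [z2 [f2 s2]]]]] := Hz.
rewrite /= in q0 v2 o2 z2 f2 s2.
rewrite -/(Ex _ F) Ex_scale -mulrA; apply: (ler_wpM2l p0); apply: (ler_wpM2l q0).
case: a Hx f1 z1 => [ia|] Hx f1 z1; [case: b Hz f2 z2 => [ib|] Hz f2 z2|].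
- have [ial fa] := f1 ia erefl.
  have [ibr fb] := f2 ib erefl.
  have dj := disj_of U.
  have iar : ia \notin leaves r by apply: dj.
  have neq : ia != ib by apply/eqP => E; move: iar; rewrite E ibr.
  have fa' : 0 < y2 ia < 1 by rewrite o2.
  exact: gF.
- by rewrite /Ex /= big_seq1 mul1r.
- by rewrite /Ex /= big_seq1 mul1r.
Qed.


Lemma Ex_two p y1 y2 (c1 c2 : option 'I_m) F :
  Ex [:: (p, (y1, c1)); (1 - p, (y2, c2))] F = p * F y1 + (1 - p) * F y2.
Proof. by rewrite /Ex !big_cons big_nil addr0. Qed.

Lemma Ex_opp d F : Ex d (fun y => - F y) = - Ex d F.
Proof. by rewrite /Ex -sumrN; apply: eq_bigr => o _; rewrite mulrN. Qed.

Lemma good_coord i : good (fun y => y i).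
Proof.
move=> y ia ib vy neq fa fb.
have [P [A [B [A' [B' [c1 [c2 [-> [_ [[_ _ e1 e2] _]]]]]]]]]] := combine_spec vy neq fa fb.
rewrite Ex_two !upd2E //.
case: ifP => [/eqP ->|_]; first by rewrite e2.
case: ifP => [/eqP ->|_]; first by rewrite e1.
by rewrite -mulrDl addrC subrK mul1r.
Qed.

Lemma good_coordN i : good (fun y => - y i).
Proof.
move=> y ia ib vy neq fa fb.
have [P [A [B [A' [B' [c1 [c2 [-> [_ [[_ _ e1 e2] _]]]]]]]]]] := combine_spec vy neq fa fb.
rewrite Ex_two !upd2E //.
case: ifP => [/eqP ->|_]; first by rewrite !mulrN -opprD e2.
case: ifP => [/eqP ->|_]; first by rewrite !mulrN -opprD e1.
by rewrite -mulrDl addrC subrK mul1r.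
Qed.

Lemma good_const c : good (fun _ => c).
Proof.
move=> y ia ib vy neq fa fb.
have [P [A [B [A' [B' [c1 [c2 [-> _]]]]]]]] := combine_spec vy neq fa fb.
by rewrite Ex_two -mulrDl addrC subrK mul1r.
Qed.

Lemma good_prod u v : u != v -> good (fun y => y u * y v).
Proof.
move=> nuv y ia ib vy neq fa fb.
have [P [A [B [A' [B' [c1 [c2 [-> [[hP _ _ _ _] [[_ _ e1 e2] [m1 m2 _ _]]]]]]]]]]] :=
  combine_spec vy neq fa fb.
rewrite Ex_two !upd2E //.
have hP0 : 0 <= P by case/andP: hP.
have hP1 : 0 <= 1 - P by case/andP: hP => _; rewrite subr_ge0.
have key : forall a b, a * b <= y ia * y ib -> a * b <= y ia * y ib -> 
   P * (a * b) + (1 - P) * (a * b) <= y ia * y ib.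
  by move=> a b h _; rewrite -mulrDl addrC subrK mul1r.
have gen : P * (A * B) + (1 - P) * (A' * B') <= y ia * y ib.
  apply: le_trans (_ : P * (y ia * y ib) + (1 - P) * (y ia * y ib) <= _).
    by apply: lerD; apply: ler_wpM2l.
  by rewrite -mulrDl addrC subrK mul1r.
have linR : forall a a' c, P * (a * c) + (1 - P) * (a' * c) = (P * a + (1 - P) * a') * c.
  by move=> a a' c; ring.
have linL : forall a a' c, P * (c * a) + (1 - P) * (c * a') = c * (P * a + (1 - P) * a').
  by move=> a a' c; ring.
have cst : forall c, P * c + (1 - P) * c = c by move=> c; ring.
rewrite -!upd2E //.
have nia : ia != ib := neq.
case: (eqVneq u ia) => [Eu|nua].
  subst u; rewrite !upd2_ia //.
  case: (eqVneq v ib) => [Ev|nvb]; first by subst v; rewrite !upd2_ib; exact: gen.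
  have nva : v != ia by rewrite eq_sym.
  by rewrite !(upd2_o _ _ _ nva nvb) linR e1.
case: (eqVneq u ib) => [Eu|nub].
  subst u; rewrite !upd2_ib.
  case: (eqVneq v ia) => [Ev|nva].
    by subst v; rewrite !upd2_ia // [y ib * _]mulrC [B * _]mulrC [B' * _]mulrC; exact: gen.
  have nvb : v != ib by rewrite eq_sym.
  by rewrite !(upd2_o _ _ _ nva nvb) linR e2.
rewrite !(upd2_o _ _ _ nua nub).
case: (eqVneq v ia) => [Ev|nva]; first by subst v; rewrite !upd2_ia // linL e1.
case: (eqVneq v ib) => [Ev|nvb]; first by subst v; rewrite !upd2_ib linL e2.
by rewrite !(upd2_o _ _ _ nva nvb) cst.
Qed.

End Round.


Section Sorting.
Variable R : realType.
Variable m k : nat.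

Definition OC (cv : 'I_m -> R) (C : {set 'I_m}) : R :=
  \sum_(l < k) (l.+1%:R)^-1 * nth 0 (sort <=%R [seq cv i | i <- enum C]) l.

Lemma nth_add (s : seq 'I_m) (f g : 'I_m -> R) mu l :
  nth 0 [seq f i + mu * g i | i <- s] l = nth 0 [seq f i | i <- s] l + mu * nth 0 [seq g i | i <- s] l.
Proof. by elim: s l => [|x s IH] [|l] //=; rewrite ?mulr0 ?addr0. Qed.

Lemma OC_idx (cv f : 'I_m -> R) C :
  (forall i j, cv i <= cv j -> f i <= f j) ->
  OC f C = \sum_(l < k) (l.+1%:R)^-1 *
     nth 0 [seq f i | i <- sort (relpre cv <=%R) (enum C)] l.
Proof.
move=> hf; rewrite /OC; apply: eq_bigr => l _; congr (_ * nth _ _ _).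
apply: le_sorted_eq.
- exact: (sort_sorted le_total).
- rewrite sorted_map; apply: (sub_sorted _ (sort_sorted _ _)).
    by move=> i j /= h; apply: hf.
  by move=> i j; apply: le_total.
- by rewrite perm_sort perm_map // perm_sym perm_sort.
Qed.

Lemma OC_split (cv c' e : 'I_m -> R) mu C :
  (forall i, cv i = c' i + mu * e i) ->
  (forall i j, cv i <= cv j -> c' i <= c' j) ->
  (forall i j, cv i <= cv j -> e i <= e j) ->
  OC cv C = OC c' C + mu * OC e C.
Proof.
move=> hcv hc he.
rewrite (@OC_idx cv cv C (fun i j h => h)) (OC_idx C hc) (OC_idx C he).
rewrite mulr_sumr -big_split /=; apply: eq_bigr => l _.
rewrite (eq_map hcv) nth_add; ring.
Qed.

Lemma nth_sorted01 (s : seq R) l :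
  sorted <=%R s -> all (fun v => (v == 0) || (v == 1)) s ->
  nth 0 s l = if (l < count (fun v : R => v == 0%R) s)%N then 0 else if (l < size s)%N then 1 else 0.
Proof.
elim: s l => [|x s IH] l; first by move=> _ _; rewrite nth_nil.
move=> hs /= /andP[hx ha].
have ss : sorted <=%R s by apply: (path_sorted hs).
case/orP: hx => /eqP hx.
  rewrite hx eqxx /=; case: l => [|l] //=.
  by rewrite IH.
have all1 : forall v, v \in s -> v = 1.
  move=> v vs.
  have h1 : 1 <= v.
    by move: hs => /=; rewrite (path_sortedE le_trans) => /andP[/allP /(_ v vs)]; rewrite hx.
  move/allP: ha => /(_ v vs) /orP[/eqP h0|/eqP //]; move: h1; rewrite h0 ler10.
  by [].
have c0 : count (fun v : R => v == 0%R) s = 0%N.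
  apply/eqP; rewrite -leqn0 leqNgt -has_count; apply/hasPn => v /all1 ->.
  by rewrite oner_eq0.
rewrite hx (_ : (1 == 0) = false) ?oner_eq0 // add0n c0.
case: l => [|l] //=.
case: ifP => hl; first by apply: all1; exact: mem_nth.
by rewrite nth_default // leqNgt -ltnS hl.
Qed.


Definition G (n : nat) : R := \sum_(l < k) (l.+1%:R)^-1 * (if (l < n)%N then 0 else 1).

Lemma OC_ind (e : 'I_m -> R) (C : {set 'I_m}) : (forall i, e i = 0 \/ e i = 1) -> #|C| = k ->
  OC e C = G (count (fun i => e i == 0) (enum C)).
Proof.
move=> he hC; rewrite /OC /G; apply: eq_bigr => l _; congr (_ * _).
rewrite nth_sorted01; first last.
- rewrite all_sort all_map; apply/allP => i _ /=.
  by case: (he i) => ->; rewrite eqxx ?orbT.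
- exact: (sort_sorted le_total).
rewrite count_sort count_map size_sort size_map -cardE hC ltn_ord.
by [].
Qed.

Definition gt (n : nat) : R := if (n < k)%N then (n.+1%:R)^-1 else 0.

Lemma G_step n : G n = G n.+1 + gt n.
Proof.
rewrite /G /gt.
have -> : \sum_(l < k) (l.+1%:R)^-1 * (if (l < n)%N then 0 else 1) =
   \sum_(l < k) ((l.+1%:R)^-1 * (if (l < n.+1)%N then 0 else 1) +
                 (l.+1%:R)^-1 * (if (val l == n) then 1 else 0) : R).
  apply: eq_bigr => l _; rewrite ltnS.
  case: (ltngtP l n) => h.
  - by rewrite ?(ltnW h) ?(ltn_eqF h) /= ?mulr0 ?addr0.
  - by rewrite ?leqNgt ?h ?(gtn_eqF h) /= ?mulr0 ?addr0.
  - by rewrite ?h ?leqnn ?eqxx ?ltnn /= ?mulr0 ?mulr1 ?add0r.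
rewrite big_split /=; congr (_ + _).
case: ifP => hn.
  rewrite (bigD1 (Ordinal hn)) //= eqxx mulr1 big1 ?addr0 // => i hi.
  case: eqP => [E|_]; last by rewrite mulr0.
  by move: hi; rewrite -val_eqE /= E eqxx.
apply: big1 => i _; case: eqP => [E|_]; last by rewrite mulr0.
by move: (ltn_ord i); rewrite E hn.
Qed.

Definition Qf (a : nat) (x : R) : R :=
  G a + ((a%:R - x) + (a%:R - x) ^+ 2) / (2 * a%:R).

Definition dq (a n : nat) : R := (a%:R - n%:R) / a%:R.

Lemma Qf_step a n : (0 < a)%N -> Qf a n%:R = Qf a n.+1%:R + dq a n.
Proof.
move=> a0; have a0' : (a%:R : R) != 0 by rewrite pnatr_eq0 -lt0n.
rewrite /Qf /dq -natr1; field; exact: a0'.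
Qed.

Lemma w_le (a n : nat) : (n.+1 <= a)%N -> (n.+1%:R : R)^-1 <= (a%:R - n%:R) / a%:R.
Proof.
move=> h.
have hA : (0 : R) < a%:R by rewrite ltr0n; apply: leq_ltn_trans h.
have hN : (0 : R) <= n%:R by [].
have hNA : (n%:R : R) + 1 <= a%:R by rewrite natr1 ler_nat.
rewrite ler_pdivlMr // mulrC ler_pdivrMr ?ltr0n // -natr1.
rewrite -subr_ge0 (_ : _ - _ = n%:R * (a%:R - n%:R - 1)); last by ring.
by rewrite mulr_ge0 //; lra.
Qed.

Lemma w_ge (a n : nat) : (0 < a)%N -> (a <= n)%N -> (a%:R - n%:R) / a%:R <= (n.+1%:R : R)^-1.
Proof.
move=> a0 h.
have hA : (0 : R) < a%:R by rewrite ltr0n.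
have hNA : (a%:R : R) <= n%:R by rewrite ler_nat.
rewrite ler_pdivrMr // mulrC ler_pdivlMr ?ltr0n // -natr1.
rewrite -subr_ge0 (_ : _ - _ = n%:R * (n%:R + 1 - a%:R)); last by ring.
rewrite mulr_ge0 //; lra.
Qed.

Lemma G_le (a n : nat) : (0 < a)%N -> G n <= Qf a n%:R.
Proof.
move=> a0.
have Qa : Qf a a%:R = G a by rewrite /Qf subrr expr0n /= addr0 mul0r addr0.
case: (leqP n a) => hna.
  suff H : forall t, (t <= a)%N -> G (a - t) <= Qf a (a - t)%:R.
    by rewrite -(subKn hna); apply: H; rewrite leq_subr.
  elim => [|t IH] ht; first by rewrite subn0 Qa.
  have e1 : (a - t = (a - t.+1).+1)%N by rewrite subnSK.
  have := IH (ltnW ht); rewrite e1 => IH'.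
  rewrite G_step (Qf_step (a - t.+1) a0).
  apply: lerD => //.
  rewrite /gt /dq; case: ifP => _; last by rewrite mulr_ge0 // ?subr_ge0 ?ler_nat ?leq_subr // invr_ge0.
  apply: w_le; by rewrite -e1 leq_subr.
suff H : forall t, G (a + t) <= Qf a (a + t)%:R.
  by rewrite -(subnKC (ltnW hna)); apply: H.
elim => [|t IH]; first by rewrite addn0 Qa.
have := IH; rewrite G_step (Qf_step (a + t) a0) => IH'.
have hd : dq a (a + t) <= gt (a + t).
  rewrite /gt /dq; case: ifP => _; first by apply: w_ge => //; rewrite leq_addr.
  by rewrite mulr_le0_ge0 // ?invr_ge0 // subr_le0 ler_nat leq_addr.
rewrite addnS; move: IH' hd.
generalize (G (a + t).+1) (Qf a (a + t).+1%:R) (dq a (a + t)) (gt (a + t)).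
move=> g1 q1 d1 i1; lra.
Qed.

End Sorting.


Section Core.
Variables (R : realType) (m k : nat) (d : seq (R * outcome R m)) (ys : 'I_m -> R).

Definition ok01 (Y : 'I_m -> R) := (forall i, Y i = 0 \/ Y i = 1) /\ \sum_i Y i = k%:R.

Hypothesis Hd : AllP (fun o : R * outcome R m => 0 <= o.1 /\ ok01 o.2.1) d.
Hypothesis Hsum : \sum_(o <- d) o.1 = 1.
Hypothesis Hmarg : forall i, Ex d (fun Y => Y i) = ys i.
Hypothesis Hpair : forall u v, u != v -> Ex d (fun Y => Y u * Y v) <= ys u * ys v.
Hypothesis Hys : forall i, 0 <= ys i.
Hypothesis HysK : \sum_i ys i = k%:R.

Lemma Ex_add F H : Ex d (fun Y => F Y + H Y) = Ex d F + Ex d H.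
Proof. by rewrite /Ex -big_split; apply: eq_bigr => o _; rewrite mulrDr. Qed.

Lemma Ex_scal c F : Ex d (fun Y => c * F Y) = c * Ex d F.
Proof. by rewrite /Ex mulr_sumr; apply: eq_bigr => o _; rewrite mulrCA. Qed.

Lemma Ex_cst c : Ex d (fun _ => c) = c.
Proof. by rewrite /Ex -big_distrl /= Hsum mul1r. Qed.

Lemma Ex_sum (I : finType) (P : pred I) (F : I -> ('I_m -> R) -> R) :
  Ex d (fun Y => \sum_(i | P i) F i Y) = \sum_(i | P i) Ex d (F i).
Proof.
rewrite /Ex (eq_bigr (fun o => \sum_(i | P i) o.1 * F i o.2.1)); last first.
  by move=> o _; rewrite mulr_sumr.
by rewrite exchange_big.
Qed.

Lemma Ex_le F H : (forall Y, ok01 Y -> F Y <= H Y) -> Ex d F <= Ex d H.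
Proof.
move=> h; apply: (ler_sum_allP Hd) => o [o0 ho].
by apply: ler_wpM2l => //; apply: h.
Qed.

Lemma Ex_eq F H : (forall Y, ok01 Y -> F Y = H Y) -> Ex d F = Ex d H.
Proof.
move=> h; apply: (eq_sum_allP Hd) => o [o0 ho].
by rewrite h.
Qed.

Lemma EN (z : 'I_m -> R) : Ex d (fun Y => \sum_i z i * Y i) = \sum_i z i * ys i.
Proof. by rewrite Ex_sum; apply: eq_bigr => i _; rewrite Ex_scal Hmarg. Qed.

Lemma EN2 (z : 'I_m -> R) : (forall i, 0 <= z i <= 1) ->
  Ex d (fun Y => (\sum_i z i * Y i) ^+ 2) <= (\sum_i z i * ys i) ^+ 2 + \sum_i z i * ys i.
Proof.
move=> hz.
have E1 : forall Y : 'I_m -> R, (\sum_i z i * Y i) ^+ 2 =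
    \sum_i \sum_j (z i * z j) * (Y i * Y j).
  move=> Y; rewrite expr2 mulr_suml; apply: eq_bigr => i _.
  rewrite mulr_sumr; apply: eq_bigr => j _; ring.
rewrite (Ex_eq (H := fun Y => \sum_i \sum_j (z i * z j) * (Y i * Y j))); last by move=> Y _; apply: E1.
rewrite E1 Ex_sum.
have E2 : \sum_i z i * ys i = \sum_i \sum_j (if i == j then z i * ys i else 0).
  apply: eq_bigr => i _; rewrite (bigD1 i) //= eqxx big1 ?addr0 // => j /negbTE.
  by rewrite eq_sym => ->.
rewrite E2 -big_split /=; apply: ler_sum => i _.
rewrite Ex_sum -big_split /=; apply: ler_sum => j _.
rewrite Ex_scal.
have zij : 0 <= z i * z j by apply: mulr_ge0; [case/andP: (hz i) | case/andP: (hz j)].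
case: eqP => [<-|/eqP nij].
  have -> : Ex d (fun Y => Y i * Y i) = ys i.
    rewrite -Hmarg; apply: Ex_eq => Y [h01 _].
    by case: (h01 i) => ->; rewrite ?mulr0 ?mulr1.
  have [z0 z1] := andP (hz i).
  have y0 := Hys i.
  have h1 : z i * z i * ys i <= z i * ys i by rewrite -mulrA ler_piMl // mulr_ge0.
  have h2 : 0 <= z i * z i * (ys i * ys i) by rewrite !mulr_ge0.
  lra.
rewrite addr0; apply: le_trans (ler_wpM2l zij (Hpair nij)) _.
by rewrite le_eqVlt; apply/orP; left; apply/eqP; ring.
Qed.


Lemma eq01 : ((0 : R) == 1) = false.
Proof. by rewrite eq_sym oner_eq0. Qed.

Lemma ind01 (v : R) : v = 0 \/ v = 1 -> ((v == 1)%:R : R) = v.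
Proof. by case => ->; rewrite ?eq01 ?eqxx. Qed.

Lemma sum_indic (P : pred 'I_m) : \sum_i (P i)%:R = (#|P|%:R : R).
Proof.
rewrite -sum1_card natr_sum [RHS]big_mkcond /=; apply: eq_bigr => i _.
by rewrite -topredE /=; case: (P i).
Qed.

Lemma card_chosen (Y : 'I_m -> R) : ok01 Y -> #|chosen Y| = k.
Proof.
move=> [h01 hs].
have : (#|chosen Y|%:R : R) = k%:R.
  rewrite -hs /chosen cardsE -sum_indic; apply: eq_bigr => i _.
  exact: ind01 (h01 i).
by move/eqP; rewrite eqr_nat => /eqP.
Qed.

Lemma count_chosen (Y e : 'I_m -> R) : ok01 Y -> (forall i, e i = 0 \/ e i = 1) ->
  (count (fun i => e i == 0) (enum (chosen Y)))%:R = \sum_i (1 - e i) * Y i.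
Proof.
move=> [h01 _] he.
rewrite -sum1_count big_enum_cond natr_sum big_mkcond /=; apply: eq_bigr => i _.
rewrite /chosen inE.
by case: (h01 i) => ->; case: (he i) => ->; rewrite ?eqxx ?oner_eq0 ?eq01 /= ?subr0 ?subrr ?mulr0 ?mulr1 ?mul0r.
Qed.


Lemma sum_ind_ge (n a : nat) : \sum_(l < n) (if (l < a)%N then 0 else 1 : R) = (n - a)%:R.
Proof.
elim: n => [|n IH]; first by rewrite big_ord0.
rewrite big_ord_recr /= IH.
case: (ltnP n a) => h.
  by rewrite addr0 (eqP (ltnW h)) (_ : (n.+1 - a = 0)%N) //; apply/eqP; rewrite subn_eq0.
by rewrite subSn // -natr1.
Qed.

Lemma sum_ind_lt (n a : nat) : (a <= n)%N -> \sum_(l < n) (if (l < a)%N then 1 else 0 : R) = a%:R.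
Proof.
move=> h.
have : \sum_(l < n) ((if (l < a)%N then 1 else 0 : R) + (if (l < a)%N then 0 else 1)) = n%:R.
  rewrite (eq_bigr (fun _ => 1)); last by move=> l _; case: ifP; rewrite ?addr0 ?add0r.
  by rewrite sumr_const card_ord.
rewrite big_split /= sum_ind_ge natrB // => E.
by move: E; lra.
Qed.

Lemma G_lb (a : nat) : (a <= k)%N -> k%:R - a%:R <= k%:R * G R k a.
Proof.
move=> h; rewrite -natrB // -sum_ind_ge /G mulr_sumr; apply: ler_sum => l _.
case: ifP => _; first by rewrite !mulr0.
rewrite mulr1 ler_pdivlMr ?ltr0n // mul1r ler_nat; exact: ltn_ord.
Qed.

Lemma G_ge0 (a : nat) : 0 <= G R k a.
Proof.
by rewrite /G; apply: sumr_ge0 => l _; case: ifP => _; rewrite ?mulr0 ?mulr1 // invr_ge0.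
Qed.

Lemma exists_a (Y : R) (n : nat) : (0 < n)%N -> 0 <= Y <= n%:R ->
  exists a : nat, [/\ (0 < a)%N, (a <= n)%N, a%:R - 1 <= Y & Y <= a%:R].
Proof.
elim: n => [//|n IH] _ /andP[h0 h1].
case: (leP Y n%:R) => hY.
  case: n IH h1 hY => [|n] IH h1 hY.
    by exists 1%N; split => //; rewrite ?subrr // -?natr1; lra.
  have [a [a0 an ha1 ha2]] := IH erefl (introT andP (conj h0 hY)).
  by exists a; split => //; apply: leqW.
exists n.+1; split => //.
by rewrite -natr1 addrK; exact: ltW.
Qed.


Definition LPv (x : 'I_k -> 'I_m -> R) (cv : 'I_m -> R) : R :=
  \sum_(l < k) \sum_(i < m) (l.+1%:R)^-1 * x l i * cv i.

Lemma LP_lb (x : 'I_k -> 'I_m -> R) (e : 'I_m -> R) (a : nat) :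
  (forall i, e i = 0 \/ e i = 1) ->
  (forall l i, 0 <= x l i) -> (forall i, \sum_l x l i <= ys i) ->
  (forall l, 1 <= \sum_i x l i) -> (0 < a)%N -> (a <= k)%N ->
  G R k a + (a%:R - \sum_i (1 - e i) * ys i) / a%:R <= LPv x e.
Proof.
move=> he hx hxy hx1 a0 ak.
have hA : (0 : R) < a%:R by rewrite ltr0n.
set ua := (a%:R : R)^-1.
have ua0 : 0 <= ua by rewrite invr_ge0 ltW.
have uaA : a%:R * ua = 1 by rewrite mulfV // gt_eqF.
have he01 : forall i, 0 <= e i <= 1 by move=> i; case: (he i) => ->; rewrite lexx ler01.
have claim : forall l : 'I_k,
   (if (l < a)%N then ua else 0) + (l.+1%:R)^-1 * (if (l < a)%N then 0 else 1)
     - ua * \sum_i x l i * (1 - e i) <= \sum_i (l.+1%:R)^-1 * x l i * e i.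
  move=> l.
  set w := (l.+1%:R : R)^-1.
  have w0 : 0 <= w by rewrite invr_ge0.
  set W := \sum_i x l i * e i.
  set X := \sum_i x l i * (1 - e i).
  have -> : \sum_i w * x l i * e i = w * W by rewrite /W mulr_sumr; apply: eq_bigr => i _; rewrite mulrA.
  have W0 : 0 <= W by apply: sumr_ge0 => i _; rewrite mulr_ge0 //; case/andP: (he01 i).
  have X0 : 0 <= X by apply: sumr_ge0 => i _; rewrite mulr_ge0 // subr_ge0; case/andP: (he01 i).
  have WX : 1 <= W + X.
    rewrite /W /X -big_split /=; apply: le_trans (hx1 l) _.
    by rewrite le_eqVlt; apply/orP; left; apply/eqP; apply: eq_bigr => i _; ring.
  case: ifP => hl.
    have wua : ua <= w by rewrite lef_pV2 ?posrE ?ltr0n // ler_nat.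
    rewrite mulr0 addr0.
    have h1 : 0 <= (w - ua) * W by rewrite mulr_ge0 // subr_ge0.
    have h2 : 0 <= ua * (W + X - 1) by rewrite mulr_ge0 // subr_ge0.
    move: h1 h2; rewrite !mulrBl !mulrBr !mulrDr mulr1 => h1 h2.
    lra.
  have wua : w <= ua.
    rewrite lef_pV2 ?posrE ?ltr0n // ler_nat; apply: leqW; by rewrite leqNgt hl.
  rewrite mulr1 add0r.
  have h1 : 0 <= w * (W + X - 1) by rewrite mulr_ge0 // subr_ge0.
  have h2 : 0 <= (ua - w) * X by rewrite mulr_ge0 // subr_ge0.
  move: h1 h2; rewrite !mulrBl !mulrBr !mulrDr mulr1 => h1 h2.
  lra.
rewrite /LPv; apply: le_trans (ler_sum _ (fun l _ => claim l)).
rewrite !big_split /=.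
have S1 : \sum_(l < k) (if (l < a)%N then ua else 0) = 1.
  rewrite -uaA mulrC -(sum_ind_lt ak) mulr_sumr; apply: eq_bigr => l _.
  by case: ifP; rewrite ?mulr1 ?mulr0.
have S2 : \sum_(l < k) (l.+1%:R)^-1 * (if (l < a)%N then 0 else 1) = G R k a by [].
have S3 : \sum_(l < k) ua * (\sum_i x l i * (1 - e i)) <= ua * \sum_i (1 - e i) * ys i.
  rewrite -mulr_sumr; apply: ler_wpM2l => //.
  rewrite exchange_big /=; apply: ler_sum => i _.
  rewrite -mulr_suml mulrC; apply: ler_wpM2l; last exact: hxy.
  by rewrite subr_ge0; case/andP: (he01 i).
rewrite S1 S2 sumrN.
have -> : (a%:R - \sum_i (1 - e i) * ys i) / a%:R = 1 - ua * \sum_i (1 - e i) * ys i.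
  by rewrite mulrBl mulfV ?gt_eqF // mulrC.
move: S3; set s3 := \sum_(l < k) _; set t3 := ua * _; lra.
Qed.


Lemma core (x : 'I_k -> 'I_m -> R) (e : 'I_m -> R) :
  (forall i, e i = 0 \/ e i = 1) ->
  (forall l i, 0 <= x l i) -> (forall i, \sum_l x l i <= ys i) ->
  (forall l, 1 <= \sum_i x l i) -> (0 < k)%N ->
  Ex d (fun Y => OC k e (chosen Y)) <= 2 * LPv x e.
Proof.
move=> he hx hxy hx1 k0.
have he01 : forall i, 0 <= e i <= 1 by move=> i; case: (he i) => ->; rewrite lexx ler01.
have hz01 : forall i, 0 <= 1 - e i <= 1.
  by move=> i; case: (he i) => ->; rewrite ?subr0 ?subrr lexx ler01.
set Yv := \sum_i (1 - e i) * ys i.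
set Dv := \sum_i e i * ys i.
have YD : Yv + Dv = k%:R.
  rewrite -HysK /Yv /Dv -big_split /=; apply: eq_bigr => i _; ring.
have Y0 : 0 <= Yv by apply: sumr_ge0 => i _; rewrite mulr_ge0 //; case/andP: (hz01 i).
have D0 : 0 <= Dv by apply: sumr_ge0 => i _; rewrite mulr_ge0 //; case/andP: (he01 i).
have [a [a0 ak ha1 ha2]] : exists a : nat, [/\ (0 < a)%N, (a <= k)%N, a%:R - 1 <= Yv & Yv <= a%:R].
  apply: exists_a => //; apply/andP; split => //; lra.
have hA : (0 : R) < a%:R by rewrite ltr0n.
set c := (2 * (a%:R : R))^-1.
have c0 : 0 < c by rewrite invr_gt0 mulr_gt0.
have step1 : Ex d (fun Y => OC k e (chosen Y)) <=
   Ex d (fun Y => G R k a + c * ((a%:R + a%:R ^+ 2) + (- (1 + 2 * a%:R)) * (\sum_i (1 - e i) * Y i)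
                  + (\sum_i (1 - e i) * Y i) ^+ 2)).
  apply: Ex_le => Y hY.
  rewrite (OC_ind he (card_chosen hY)).
  apply: le_trans (G_le R k _ a0) _.
  rewrite count_chosen // /Qf /c le_eqVlt; apply/orP; left; apply/eqP.
  field; rewrite gt_eqF //.
have step2 : Ex d (fun Y => G R k a + c * ((a%:R + a%:R ^+ 2) + (- (1 + 2 * a%:R)) * (\sum_i (1 - e i) * Y i)
                  + (\sum_i (1 - e i) * Y i) ^+ 2)) =
   G R k a + c * ((a%:R + a%:R ^+ 2) + (- (1 + 2 * a%:R)) * Yv
                  + Ex d (fun Y => (\sum_i (1 - e i) * Y i) ^+ 2)).
  by rewrite Ex_add Ex_cst Ex_scal !Ex_add !Ex_cst Ex_scal EN.
set E2 := Ex d (fun Y => (\sum_i (1 - e i) * Y i) ^+ 2).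
have E2a : E2 <= Yv ^+ 2 + Yv by apply: EN2.
have E2b : E2 <= Yv ^+ 2 + Dv.
  have -> : E2 = Ex d (fun Y => k%:R ^+ 2 + (- (2 * k%:R)) * (\sum_i e i * Y i) + (\sum_i e i * Y i) ^+ 2).
    apply: Ex_eq => Y [_ hs].
    have -> : \sum_i (1 - e i) * Y i = k%:R - \sum_i e i * Y i.
      rewrite -hs -sumrB; apply: eq_bigr => i _; ring.
    ring.
  rewrite !Ex_add Ex_cst Ex_scal EN.
  have := EN2 he01; rewrite -/Dv => h.
  have -> : Yv = k%:R - Dv by rewrite -YD addrK.
  move: h; set F2 := Ex d _; nra.
have Glb := G_lb ak.
have G0 := G_ge0 a.
have LPb := LP_lb he hx hxy hx1 a0 ak.
rewrite -/Yv in LPb.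
have hak : (a%:R : R) <= k%:R by rewrite ler_nat.
set g := G R k a in step1 step2 Glb G0 LPb.
set A := (a%:R : R) in ha1 ha2 hA c c0 step1 step2 Glb LPb hak.
set K := (k%:R : R) in YD Glb hak E2b.
have key : exists V, E2 <= Yv ^+ 2 + V /\ V <= 2 * A * g + 2 * (A - Yv).
  case: (leP K (2 * A)) => hK.
    exists Dv; split => //.
    have : K * g <= 2 * A * g by rewrite ler_wpM2r.
    lra.
  exists Yv; split => //.
  have h2 : 0 < K * (2 * g - 1).
    have : 2 * (K - A) <= 2 * (K * g) by rewrite ler_pM2l // ltr0n.
    lra.
  have h3 : 0 < 2 * g - 1.
    move: h2; rewrite pmulr_rgt0 //; lra.
  have : 0 <= A * (2 * g - 1) by rewrite mulr_ge0 // ?ltW.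
  lra.
have [V [hV1 hV2]] := key.
have th : (A - Yv) ^+ 2 <= A - Yv.
  rewrite expr2 ler_piMl //; lra.
set S := A + A ^+ 2 + - (1 + 2 * A) * Yv + E2.
have hS : S <= 2 * A * g + 4 * (A - Yv).
  rewrite /S; move: th hV1 hV2; rewrite !expr2; lra.
have hcS : c * S <= g + 2 * ((A - Yv) / A).
  apply: le_trans (ler_wpM2l (ltW c0) hS) _.
  rewrite /c le_eqVlt; apply/orP; left; apply/eqP; field; rewrite gt_eqF //.
apply: le_trans step1 _; rewrite step2 -/S.
have : g + (A - Yv) / A <= LPv x e := LPb.
lra.
Qed.


Lemma nth_all0 (s : seq R) l : all (fun v => v == 0) s -> nth 0 s l = 0.
Proof.
elim: s l => [|v s IH] l /=; first by rewrite nth_nil.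
by case/andP => /eqP hv hs; case: l => [|l] //=; apply: IH.
Qed.

Lemma OC0 (cv : 'I_m -> R) C : (forall i, cv i = 0) -> OC k cv C = 0.
Proof.
move=> h; rewrite /OC big1 // => l _; rewrite nth_all0 ?mulr0 //.
by rewrite all_sort all_map; apply/allP => i _ /=; rewrite h.
Qed.

Lemma LP_split (x : 'I_k -> 'I_m -> R) (cv c' e : 'I_m -> R) mu :
  (forall i, cv i = c' i + mu * e i) -> LPv x cv = LPv x c' + mu * LPv x e.
Proof.
move=> h; rewrite /LPv mulr_sumr -big_split; apply: eq_bigr => l _ /=.
rewrite mulr_sumr -big_split; apply: eq_bigr => i _ /=; rewrite h; ring.
Qed.

Lemma main_an (x : 'I_k -> 'I_m -> R) :
  (forall l i, 0 <= x l i) -> (forall i, \sum_l x l i <= ys i) ->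
  (forall l, 1 <= \sum_i x l i) ->
  forall cv : 'I_m -> R, (forall i, 0 <= cv i) ->
  Ex d (fun Y => OC k cv (chosen Y)) <= 2 * LPv x cv.
Proof.
move=> hx hxy hx1.
case: (posnP k) => hk.
  move=> cv _.
  have Z : forall F : 'I_k -> R, \sum_(l < k) F l = 0.
    by move=> F; rewrite big1 // => l; have := ltn_ord l; move: (nat_of_ord l); rewrite hk.
  rewrite /LPv Z mulr0 (Ex_eq (H := fun _ => 0)) ?Ex_cst // => Y _.
  by rewrite /OC Z.
suff H : forall (n : nat) (cv : 'I_m -> R), (forall i, 0 <= cv i) ->
    (#|[set i | (0 < cv i)%R]| <= n)%N -> Ex d (fun Y => OC k cv (chosen Y)) <= 2 * LPv x cv.
  by move=> cv hcv; apply: (H _ cv hcv (leqnn _)).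
elim => [|n IH] cv hcv hn.
- have h0 : forall i, cv i = 0.
    move=> i; apply/eqP; rewrite eq_le hcv andbT leNgt; apply/negP => hi.
    by move: hn; rewrite leqn0 => /eqP/cards0_eq/setP/(_ i); rewrite !inE hi.
  rewrite (Ex_eq (H := fun _ => 0)) ?Ex_cst; last by move=> Y _; apply: OC0.
  rewrite /LPv big1 ?mulr0 // => l _; rewrite big1 // => i _; by rewrite h0 mulr0.
case: (pickP [pred i | 0 < cv i]) => [i1 hi1|hnone]; last first.
  have h0 : forall i, cv i = 0.
    move=> i; apply/eqP; rewrite eq_le hcv andbT leNgt; apply/negP => hi.
    by have := hnone i; rewrite /= hi.
  rewrite (Ex_eq (H := fun _ => 0)) ?Ex_cst; last by move=> Y _; apply: OC0.
  rewrite /LPv big1 ?mulr0 // => l _; rewrite big1 // => i _; by rewrite h0 mulr0.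
case: (arg_minP cv hi1) => i0 hi0 hmin.
set mu := cv i0.
have mu0 : 0 < mu by [].
set e := fun i => if 0 < cv i then 1 else 0 : R.
set c' := fun i => cv i - mu * e i.
have hsplit : forall i, cv i = c' i + mu * e i by move=> i; rewrite /c' subrK.
have he : forall i, e i = 0 \/ e i = 1 by move=> i; rewrite /e; case: ifP; [right|left].
have hc'0 : forall i, 0 <= c' i.
  move=> i; rewrite /c' /e; case: ifP => hi.
    by rewrite mulr1 subr_ge0; apply: hmin.
  by rewrite mulr0 subr0.
have hmon_e : forall i j, cv i <= cv j -> e i <= e j.
  move=> i j hij; rewrite /e; case: ifP => hi.
    by rewrite (lt_le_trans hi hij).
  by case: ifP => _; rewrite ?ler01.
have hmon_c : forall i j, cv i <= cv j -> c' i <= c' j.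
  move=> i j hij; rewrite /c' /e; case: ifP => hi.
    by rewrite (lt_le_trans hi hij) lerD2r.
  have ci0 : cv i = 0 by apply/eqP; rewrite eq_le hcv andbT leNgt hi.
  rewrite ci0 mulr0 subr0; move: (hc'0 j); by rewrite /c' /e.
have hcard : (#|[set i | (0 < c' i)%R]| <= n)%N.
  rewrite -ltnS; apply: leq_trans hn; apply: proper_card; apply/properP; split.
    apply/subsetP => i; rewrite !inE /c' /e; case: ifP => // hi.
    by rewrite mulr0 subr0 hi.
  exists i0; rewrite !inE //.
  by rewrite /c' /e mu0 mulr1 subrr ltxx.
have IHc := IH c' hc'0 hcard.
have Ce := core he hx hxy hx1 hk.
rewrite (LP_split x hsplit).
rewrite (Ex_eq (H := fun Y => OC k c' (chosen Y) + mu * OC k e (chosen Y))); last first.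
  by move=> Y _; apply: OC_split.
rewrite Ex_add Ex_scal mulrDr.
apply: lerD => //.
by rewrite mulrCA; apply: ler_wpM2l => //; apply: ltW.
Qed.

End Core.


Lemma AllP_impl {T} (P Q : T -> Prop) s : AllP P s -> (forall x, P x -> Q x) -> AllP Q s.
Proof. by elim: s => //= x s IH [H1 H2] H; split; [apply: H | apply: IH]. Qed.

Lemma sum01_nat (R : realType) (m : nat) (P : pred 'I_m) (Y : 'I_m -> R) :
  (forall i, P i -> Y i = 0 \/ Y i = 1) -> exists n : nat, \sum_(i | P i) Y i = n%:R.
Proof.
move=> h; apply: (big_ind (fun x => exists n : nat, x = n%:R)).
- by exists 0%N.
- by move=> x y [n1 ->] [n2 ->]; exists (n1 + n2)%N; rewrite natrD.
- by move=> i /h [->|->]; [exists 0%N | exists 1%N].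
Qed.

Lemma no_frac (R : realType) (m k : nat) (Y : 'I_m -> R) i0 :
  (forall i, i != i0 -> Y i = 0 \/ Y i = 1) -> 0 < Y i0 < 1 -> \sum_i Y i = k%:R -> False.
Proof.
move=> h /andP[h0 h1] hs.
have [n hn] := sum01_nat (P := fun i => i != i0) h.
move: hs; rewrite (bigD1 i0) //= hn => E.
have E' : Y i0 = k%:R - n%:R by rewrite -E addrK.
rewrite E' in h0 h1.
have nk : (n < k)%N by rewrite -(ltr_nat R) -subr_gt0.
have : (n.+1%:R : R) <= k%:R by rewrite ler_nat.
rewrite -natr1; lra.
Qed.

Theorem lemma2 (R : realType) (n m k : nat) (c : 'I_m -> 'I_n -> R)
  (xs : 'I_k -> 'I_m -> 'I_n -> R) (ys : 'I_m -> R) (t : ttree m) :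
  (k <= m)%N ->
  (forall i j, 0 <= c i j) ->
  lp_optimal c xs ys ->
  tree_ok t ->
  forall j : 'I_n,
    rounding_expect t ys (fun Y => ordered_cost k c (chosen Y) j)
      <= (23589%:R / 10000%:R) * lp_obj_j c xs j.
Proof.
move=> km hc [[hsum hxy hx1 hy hx] _] tok j.
have U : uniq (leaves t) by rewrite (perm_uniq tok) enum_uniq.
have inl : forall i, i \in leaves t by move=> i; rewrite (perm_mem tok) mem_enum.
have vy : valid ys by [].
set d := round t ys.
have Hinv := round_inv U vy.
have Hd : AllP (fun o : R * outcome R m => 0 <= o.1 /\ ok01 k o.2.1) d.
  apply: (AllP_impl Hinv) => -[p [Y a]] [p0 [vY [_ [z1 [f1 s1]]]]]; rewrite /= in p0 vY z1 f1 s1 *.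
  have s1' : \sum_i Y i = k%:R by rewrite s1.
  case: a z1 f1 => [i0|] z1 f1.
    exfalso; have [_ fr] := f1 i0 erefl.
    apply: (no_frac (k := k) _ fr s1') => i ni; apply: z1 => //.
    by case=> E; move: ni; rewrite E eqxx.
  by split => //; split => // i; apply: z1.
have Hsum : \sum_(o <- d) o.1 = 1.
  have h1 := round_Ex (good_const 1) U vy.
  have h2 := round_Ex (good_const (-1)) U vy.
  have e1 : Ex d (fun _ => 1) = \sum_(o <- d) o.1 by rewrite /Ex; apply: eq_bigr => o _; rewrite mulr1.
  have e2 : Ex d (fun _ => -1) = - \sum_(o <- d) o.1.
    by rewrite /Ex -sumrN; apply: eq_bigr => o _; rewrite mulrN1.
  rewrite -/d e1 in h1; rewrite -/d e2 in h2.
  lra.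
have Hmarg : forall i, Ex d (fun Y => Y i) = ys i.
  move=> i; apply/eqP; rewrite eq_le (round_Ex (good_coord i) U vy) /=.
  have := round_Ex (good_coordN i) U vy; rewrite Ex_opp lerN2 //.
have Hpair : forall u v, u != v -> Ex d (fun Y => Y u * Y v) <= ys u * ys v.
  by move=> u v nuv; apply: (round_Ex (good_prod nuv) U vy).
have Hys : forall i, 0 <= ys i by move=> i; case/andP: (hy i).
have key := main_an Hd Hsum Hmarg Hpair Hys hsum
  (x := fun l i => xs l i j) (fun l i => proj1 (andP (hx l i j)))
  (fun i => hxy i j) (fun l => hx1 j l) (hc^~ j).
have LP0 : 0 <= lp_obj_j c xs j.
  rewrite /lp_obj_j; apply: sumr_ge0 => l _; apply: sumr_ge0 => i _.
  by rewrite !mulr_ge0 // ?invr_ge0 //; case/andP: (hx l i j).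
apply: le_trans key _.
apply: ler_wpM2r => //.
by rewrite ler_pdivlMr ?ltr0n //; rewrite -natrM ler_nat.
Qed.
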